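(* Let $h>0$ and let $(\tau,\mu):\mathbb R\to\mathbb R^2$ be any solution of the system $\tau'=1+K(\tau,\mu)\mu$, $\mu'=-K(\tau,\mu)\tau$. Then there is a compact interval $[A,B]\subset\mathbb R$ such that $\mu\neq0$ outside $[A,B]$ and the function $\nu=-\tau/\mu$ is bounded on $\mathbb R\setminus[A,B]$.
   Context: Fix $h>0$. For $(\tau,\mu)\in\mathbb R^2$ put $r^2=\tau^2+\mu^2$ and define $K:\mathbb R^2\to\mathbb R$ by $$K(\tau,\mu)=\frac{2\big(\tau^2+h^2(1+\mu^2)\big)\tau+(h^2-1)(1+\mu^2)\mu}{(1+r^2)(h^2+r^2)}.$$ Consider the autonomous ODE system $\tau'=1+K(\tau,\mu)\mu$, $\mu'=-K(\tau,\mu)\tau$ for functions $s\mapsto(\tau(s),\mu(s))$; all its solutions are defined on $\mathbb R$. *)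

(* Defs.v *)
From Stdlib Require Import Reals.
Open Scope R_scope.

Definition Kfun (h tau mu : R) : R :=
  let r2 := tau ^ 2 + mu ^ 2 in
  (2 * (tau ^ 2 + h ^ 2 * (1 + mu ^ 2)) * tau + (h ^ 2 - 1) * (1 + mu ^ 2) * mu)
  / ((1 + r2) * (h ^ 2 + r2)).

(* Main.v *)
Require Import Defs.
From Stdlib Require Import Reals Lra Psatz Classical.
Open Scope R_scope.

Lemma locR (g : R -> R) c l d : derivable_pt_lim g c l -> 0 < l -> 0 < d ->
  exists t, c < t < c + d /\ g c < g t.
Proof.
  intros H Hl Hd.
  destruct (H (l/2) ltac:(lra)) as [del Hdel].
  set (hh := Rmin (del/2) (d/2)).
  assert (Hh1 : 0 < hh) by (unfold hh; apply Rmin_pos; pose proof (cond_pos del); lra).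
  assert (Hh2 : hh <= del/2) by apply Rmin_l.
  assert (Hh3 : hh <= d/2) by apply Rmin_r.
  pose proof (cond_pos del).
  specialize (Hdel hh ltac:(lra) ltac:(rewrite Rabs_pos_eq; lra)).
  apply Rabs_def2 in Hdel. destruct Hdel as [_ Hq].
  exists (c + hh). split; [lra|].
  set (q := (g (c + hh) - g c) / hh) in *.
  assert (E : g (c + hh) - g c = q * hh) by (unfold q; field; lra).
  nra.
Qed.

Lemma locL (g : R -> R) c l d : derivable_pt_lim g c l -> 0 < l -> 0 < d ->
  exists t, c - d < t < c /\ g t < g c.
Proof.
  intros H Hl Hd.
  destruct (H (l/2) ltac:(lra)) as [del Hdel].
  set (hh := Rmin (del/2) (d/2)).
  assert (Hh1 : 0 < hh) by (unfold hh; apply Rmin_pos; pose proof (cond_pos del); lra).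
  assert (Hh2 : hh <= del/2) by apply Rmin_l.
  assert (Hh3 : hh <= d/2) by apply Rmin_r.
  pose proof (cond_pos del).
  specialize (Hdel (-hh) ltac:(lra) ltac:(rewrite Rabs_Ropp, Rabs_pos_eq; lra)).
  apply Rabs_def2 in Hdel. destruct Hdel as [_ Hq].
  exists (c + - hh). split; [lra|].
  set (q := (g (c + - hh) - g c) / - hh) in *.
  assert (E : g (c + - hh) - g c = q * (- hh)) by (unfold q; field; lra).
  nra.
Qed.

Lemma cont_eps (g : R -> R) c l : derivable_pt_lim g c l ->
  forall eps, 0 < eps -> exists del, 0 < del /\
    forall t, Rabs (t - c) < del -> Rabs (g t - g c) < eps.
Proof.
  intros H eps Heps.
  assert (Hc : continuity_pt g c) by (apply derivable_continuous_pt; exists l; exact H).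
  unfold continuity_pt, continue_in, limit1_in, limit_in in Hc.
  destruct (Hc eps Heps) as [del [Hd Hdel]].
  exists del. split; [exact Hd|].
  intros t Ht.
  destruct (Req_dec t c) as [->|Hne].
  - rewrite Rminus_diag, Rabs_R0; exact Heps.
  - apply (Hdel t). split. { unfold D_x, no_cond. split; auto. } exact Ht.
Qed.

Lemma last_cross (g g' : R -> R) a b L : a < b ->
  (forall t, a <= t <= b -> derivable_pt_lim g t (g' t)) ->
  L <= g a -> g b < L ->
  exists c, a <= c < b /\ g c = L /\ forall t, c < t <= b -> g t < L.
Proof.
  intros Hab Hd Ha Hb.
  set (E := fun t => a <= t <= b /\ L <= g t).
  assert (HB : bound E) by (exists b; intros t [[_ Ht] _]; exact Ht).
  assert (HE : exists x, E x) by (exists a; unfold E; lra).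
  destruct (completeness E HB HE) as [c [Hub Hlub]].
  assert (Hac : a <= c) by (apply Hub; unfold E; lra).
  assert (Hcb : c <= b) by (apply Hlub; intros t [[_ Ht] _]; exact Ht).
  assert (Hge : L <= g c).
  { destruct (Rle_or_lt L (g c)) as [Hl|Hl]; [exact Hl|exfalso].
    destruct (cont_eps g c (g' c) (Hd c ltac:(lra)) (L - g c) ltac:(lra)) as [del [Hdel Hc]].
    assert (c <= c - del/2).
    { apply Hlub. intros t [Ht1 Ht2].
      destruct (Rle_or_lt t (c - del/2)) as [|Hlt]; [assumption|].
      assert (t <= c) by (apply Hub; split; assumption).
      specialize (Hc t ltac:(rewrite Rabs_left1; lra)).
      apply Rabs_def2 in Hc. lra. }
    lra. }
  assert (Hcb' : c < b) by (destruct (Req_dec c b); [subst; lra| lra]).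
  assert (Hle : g c <= L).
  { destruct (Rle_or_lt (g c) L) as [Hl|Hl]; [exact Hl|exfalso].
    destruct (cont_eps g c (g' c) (Hd c ltac:(lra)) (g c - L) ltac:(lra)) as [del [Hdel Hc]].
    set (t := Rmin (c + del/2) b).
    assert (t <= b) by apply Rmin_r.
    assert (Ht1 : c < t) by (unfold t; apply Rmin_glb_lt; lra).
    assert (t <= c + del/2) by apply Rmin_l.
    assert (t <= c).
    { apply Hub. split; [lra|].
      specialize (Hc t ltac:(rewrite Rabs_pos_eq; lra)).
      apply Rabs_def2 in Hc. lra. }
    lra. }
  exists c. split; [lra|]. split; [lra|].
  intros t [Ht1 Ht2].
  destruct (Rle_or_lt L (g t)) as [Hl|Hl]; [|exact Hl].
  assert (t <= c) by (apply Hub; unfold E; split; [lra|exact Hl]).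
  lra.
Qed.

Lemma barrier (g g' : R -> R) a L :
  (forall t, a <= t -> derivable_pt_lim g t (g' t)) -> L <= g a ->
  (forall t, a <= t -> g t = L -> 0 < g' t) -> forall t, a < t -> L < g t.
Proof.
  intros Hd Ha Hp.
  assert (Strict : forall t, a < t -> ~ g t < L).
  { intros t Ht Hlt.
    destruct (last_cross g g' a t L Ht (fun u Hu => Hd u (proj1 Hu)) Ha Hlt) as [c [Hc [Hgc Hafter]]].
    destruct (locR g c (g' c) (t - c) (Hd c ltac:(lra)) (Hp c ltac:(lra) Hgc) ltac:(lra)) as [u [Hu Hgu]].
    specialize (Hafter u ltac:(lra)). lra. }
  intros t Ht.
  destruct (Rle_or_lt (g t) L) as [Hle|Hlt]; [exfalso|exact Hlt].
  destruct Hle as [Hlt|Heq].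
  - exact (Strict t Ht Hlt).
  - destruct (locL g t (g' t) (t - a) (Hd t ltac:(lra)) (Hp t ltac:(lra) Heq) ltac:(lra)) as [u [Hu Hgu]].
    apply (Strict u ltac:(lra)). lra.
Qed.

Lemma mvt_le (g g' : R -> R) a b k : a <= b ->
  (forall t, a <= t <= b -> derivable_pt_lim g t (g' t)) ->
  (forall t, a < t < b -> g' t <= k) -> g b - g a <= k * (b - a).
Proof.
  intros Hab Hd Hk. destruct Hab as [Hab|<-].
  - destruct (MVT_cor2 g g' a b Hab Hd) as [c [Hc1 Hc2]].
    rewrite Hc1. apply Rmult_le_compat_r; [lra|]. apply Hk; lra.
  - lra.
Qed.

Lemma mvt_ge (g g' : R -> R) a b k : a <= b ->
  (forall t, a <= t <= b -> derivable_pt_lim g t (g' t)) ->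
  (forall t, a < t < b -> k <= g' t) -> k * (b - a) <= g b - g a.
Proof.
  intros Hab Hd Hk. destruct Hab as [Hab|<-].
  - destruct (MVT_cor2 g g' a b Hab Hd) as [c [Hc1 Hc2]].
    rewrite Hc1. apply Rmult_le_compat_r; [lra|]. apply Hk; lra.
  - lra.
Qed.

Lemma dmul (f g : R -> R) x a b : derivable_pt_lim f x a -> derivable_pt_lim g x b ->
  derivable_pt_lim (fun t => f t * g t) x (a * g x + f x * b).
Proof. intros; apply (derivable_pt_lim_mult f g); auto. Qed.
Lemma dplus (f g : R -> R) x a b : derivable_pt_lim f x a -> derivable_pt_lim g x b ->
  derivable_pt_lim (fun t => f t + g t) x (a + b).
Proof. intros; apply (derivable_pt_lim_plus f g); auto. Qed.
Lemma dminus (f g : R -> R) x a b : derivable_pt_lim f x a -> derivable_pt_lim g x b ->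
  derivable_pt_lim (fun t => f t - g t) x (a - b).
Proof. intros; apply (derivable_pt_lim_minus f g); auto. Qed.
Lemma dopp (f : R -> R) x a : derivable_pt_lim f x a ->
  derivable_pt_lim (fun t => - f t) x (- a).
Proof. intros; apply (derivable_pt_lim_opp f); auto. Qed.
Lemma dconst (c : R) x : derivable_pt_lim (fun _ => c) x 0.
Proof. apply derivable_pt_lim_const. Qed.
Lemma did x : derivable_pt_lim (fun t => t) x 1.
Proof. apply derivable_pt_lim_id. Qed.
Lemma ddiv (f g : R -> R) x a b : derivable_pt_lim f x a -> derivable_pt_lim g x b ->
  g x <> 0 -> derivable_pt_lim (fun t => f t / g t) x ((a * g x - b * f x) / (g x)^2).
Proof. intros. replace ((g x)^2) with (Rsqr (g x)) by (unfold Rsqr; ring).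
  apply (derivable_pt_lim_div f g); auto. Qed.
Lemma dsqrt (f : R -> R) x a : derivable_pt_lim f x a -> 0 < f x ->
  derivable_pt_lim (fun t => sqrt (f t)) x (a / (2 * sqrt (f x))).
Proof. intros H Hp.
  replace (a / (2 * sqrt (f x))) with (/ (2 * sqrt (f x)) * a) by (unfold Rdiv; ring).
  apply (derivable_pt_lim_comp f sqrt); auto. apply derivable_pt_lim_sqrt; auto. Qed.
Lemma dln (f : R -> R) x a : derivable_pt_lim f x a -> 0 < f x ->
  derivable_pt_lim (fun t => ln (f t)) x (a / f x).
Proof. intros H Hp.
  replace (a / f x) with (/ f x * a) by (unfold Rdiv; ring).
  apply (derivable_pt_lim_comp f ln); auto. apply derivable_pt_lim_ln; auto. Qed.
Lemma dext (f : R -> R) x a b : derivable_pt_lim f x a -> a = b -> derivable_pt_lim f x b.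
Proof. intros H ->; exact H. Qed.

Definition Nn h t m := 2*(t^2 + h^2*(1+m^2))*t + (h^2-1)*(1+m^2)*m.
Definition Dn h t m := (1 + (t^2+m^2)) * (h^2 + (t^2+m^2)).
Lemma Kfun_eq h t m : Kfun h t m = Nn h t m / Dn h t m.
Proof. reflexivity. Qed.
Lemma Dn_pos h t m : 0 < h -> 0 < Dn h t m.
Proof. intros. unfold Dn. apply Rmult_lt_0_compat; nra. Qed.

Definition sol h (tau mu : R -> R) :=
  (forall s, derivable_pt_lim tau s (1 + Kfun h (tau s) (mu s) * mu s)) /\
  (forall s, derivable_pt_lim mu s (- (Kfun h (tau s) (mu s) * tau s))).

Definition Pf h t m := (1 + (t^2+m^2)) / ((1 + m^2) * (h^2 + (t^2+m^2))).
Lemma Pf_pos h t m : 0 < h -> 0 < Pf h t m.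
Proof. intros. unfold Pf. apply Rdiv_lt_0_compat; [nra|]. apply Rmult_lt_0_compat; nra. Qed.
Definition Gf h t m := m * sqrt (Pf h t m).
Definition Gd h t m := - 2 * t^2 * (t^2 + h^2 + h^2*m^2) /
   (sqrt (Pf h t m) * (h^2 + (t^2+m^2))^2 * (1+m^2)^2).

Lemma dsq (f : R -> R) x a : derivable_pt_lim f x a ->
  derivable_pt_lim (fun t => f t ^ 2) x (2 * f x * a).
Proof. intros H.
  replace (2 * f x * a) with ((INR 2 * f x ^ Init.Nat.pred 2) * a) by (simpl; ring).
  apply (derivable_pt_lim_comp f (fun y => y ^ 2)); auto. apply derivable_pt_lim_pow. Qed.

Lemma G_der h tau mu : 0 < h -> sol h tau mu -> forall s,
  derivable_pt_lim (fun s => Gf h (tau s) (mu s)) s (Gd h (tau s) (mu s)).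
Proof.
  intros hp [Ht Hm] s.
  pose proof (Pf_pos h (tau s) (mu s) hp) as PP.
  assert (SP : 0 < sqrt (Pf h (tau s) (mu s))) by (apply sqrt_lt_R0; exact PP).
  assert (SS : sqrt (Pf h (tau s) (mu s)) * sqrt (Pf h (tau s) (mu s)) = Pf h (tau s) (mu s))
    by (apply sqrt_sqrt; lra).
  unfold Gf.
  eapply dext.
  { apply dmul. apply Hm. apply dsqrt; [|exact PP]. unfold Pf.
    apply ddiv.
    - apply dplus. apply dconst. apply dplus; apply dsq; [apply Ht|apply Hm].
    - apply dmul. apply dplus. apply dconst. apply dsq; apply Hm.
      apply dplus. apply dconst. apply dplus; apply dsq; [apply Ht|apply Hm].
    - apply Rgt_not_eq. apply Rmult_lt_0_compat; nra. }
  set (S := sqrt (Pf h (tau s) (mu s))) in *.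
  set (t := tau s) in *. set (m := mu s) in *.
  unfold Gd. change (sqrt (Pf h t m)) with S.
  match goal with |- ?A * S + m * (?X / (2 * S)) = _ =>
    transitivity ((2 * A * (S * S) + m * X) / (2 * S)); [field; repeat split; apply Rgt_not_eq; nra|] end.
  rewrite SS. unfold Pf. rewrite Kfun_eq. unfold Nn, Dn.
  change (tau s) with t; change (mu s) with m. clearbody t m S. field. repeat split; apply Rgt_not_eq; nra.
Qed.

Lemma Gd_nonpos h t m : 0 < h -> Gd h t m <= 0.
Proof.
  intros hp. unfold Gd.
  assert (0 < sqrt (Pf h t m)) by (apply sqrt_lt_R0; apply Pf_pos; auto).
  assert (0 < (h ^ 2 + (t ^ 2 + m ^ 2)) ^ 2) by (apply pow_lt; nra).
  assert (0 < (1 + m ^ 2) ^ 2) by (apply pow_lt; nra).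
  set (Y := sqrt (Pf h t m) * (h ^ 2 + (t ^ 2 + m ^ 2)) ^ 2 * (1 + m ^ 2) ^ 2).
  assert (0 < Y) by (unfold Y; apply Rmult_lt_0_compat; [apply Rmult_lt_0_compat; assumption | assumption]).
  assert (0 < / Y) by (apply Rinv_0_lt_compat; auto).
  assert (0 <= t^2 * (t ^ 2 + h ^ 2 + h ^ 2 * m ^ 2)) by (apply Rmult_le_pos; nra).
  unfold Rdiv. nra.
Qed.

Lemma G_mono h tau mu a b : 0 < h -> sol h tau mu -> a <= b ->
  Gf h (tau b) (mu b) <= Gf h (tau a) (mu a).
Proof.
  intros hp Hs Hab.
  pose proof (mvt_le (fun s => Gf h (tau s) (mu s)) (fun s => Gd h (tau s) (mu s)) a b 0 Hab
    (fun t _ => G_der h tau mu hp Hs t) (fun t _ => Gd_nonpos h _ _ hp)).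
  simpl in H. lra.
Qed.

Definition fpoly h t m := h^2*m + 2*h^2*(t^2+m^2)*(m+t) + (t^2+m^2)*(m+2*t)*(t^2+h^2*m^2).

Lemma phi_der h tau mu s : 0 < h -> sol h tau mu -> mu s <> 0 ->
  derivable_pt_lim (fun s => tau s / mu s) s
    (fpoly h (tau s) (mu s) / ((mu s)^2 * Dn h (tau s) (mu s))).
Proof.
  intros hp [Ht Hm] Hmu.
  eapply dext. { apply ddiv; [apply Ht|apply Hm|exact Hmu]. }
  pose proof (Dn_pos h (tau s) (mu s) hp).
  rewrite Kfun_eq. unfold fpoly. unfold Dn in *. unfold Nn.
  field. repeat split; try exact Hmu; apply Rgt_not_eq; nra.
Qed.

Lemma f_neg h t m : 0 < h -> m < 0 -> t <= 0 -> fpoly h t m < 0.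
Proof.
  intros hp hm ht. unfold fpoly.
  assert (0 < h^2) by nra.
  assert (0 <= t^2+m^2) by nra.
  assert (0 <= t^2+h^2*m^2) by nra.
  assert (h^2*m < 0) by nra.
  assert (2*h^2*(t^2+m^2)*(m+t) <= 0).
  { assert (0 <= 2*h^2*(t^2+m^2)) by nra. nra. }
  assert ((t^2+m^2)*(m+2*t)*(t^2+h^2*m^2) <= 0).
  { assert (0 <= (t^2+m^2)*(t^2+h^2*m^2)) by nra. nra. }
  lra.
Qed.

Lemma f_pos_big h t m : 0 < h -> m < 0 -> -m <= t -> h + 1 <= t^2 -> 0 < fpoly h t m.
Proof.
  intros hp hm ht ht2. unfold fpoly.
  assert (0 < h^2) by nra.
  assert (2*h^2*(t^2+m^2)*(m+t) >= 0).
  { assert (0 <= 2*h^2*(t^2+m^2)) by nra. nra. }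
  assert (E1 : t^2 * t^2 <= (t^2+m^2)*(t^2+h^2*m^2)).
  { apply Rmult_le_compat; nra. }
  assert (E2 : (t^2+m^2)*(t^2+h^2*m^2)*(-m) <= (t^2+m^2)*(m+2*t)*(t^2+h^2*m^2)).
  { assert (0 <= (t^2+m^2)*(t^2+h^2*m^2)) by nra. nra. }
  assert (E3 : t^2*t^2*(-m) <= (t^2+m^2)*(t^2+h^2*m^2)*(-m)) by nra.
  assert (E4 : (h+1)*(h+1) <= t^2 * t^2) by nra.
  nra.
Qed.

Lemma f_pos_up h t m : 0 < h -> 0 < m -> -m/2 <= t -> 0 < fpoly h t m.
Proof.
  intros hp hm ht. unfold fpoly.
  assert (0 < h^2) by nra.
  assert (0 <= 2*h^2*(t^2+m^2)*(m+t)).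
  { assert (0 <= 2*h^2*(t^2+m^2)) by nra. nra. }
  assert (0 <= (t^2+m^2)*(m+2*t)*(t^2+h^2*m^2)).
  { assert (0 <= (t^2+m^2)*(t^2+h^2*m^2)) by nra. nra. }
  nra.
Qed.

Lemma f_lower h t m d : 0 < h -> 0 < m -> 0 < d -> d * m <= m + 2*t ->
  (h^2 * Rmin 1 d / (1+h^2)) * m * Dn h t m <= fpoly h t m.
Proof.
  intros hp hm hd hw. unfold fpoly, Dn.
  set (r := t^2+m^2).
  assert (hr : 0 <= r) by (unfold r; nra).
  assert (0 < h^2) by nra.
  set (e := Rmin 1 d).
  assert (he1 : e <= 1) by apply Rmin_l.
  assert (he2 : e <= d) by apply Rmin_r.
  assert (he0 : 0 < e) by (apply Rmin_pos; lra).
  set (k := h^2/(1+h^2)).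
  assert (hk : k * (1+h^2) = h^2) by (unfold k; field; nra).
  assert (hk0 : 0 < k) by (unfold k; apply Rdiv_lt_0_compat; nra).
  assert (hk1 : k <= 1) by nra.
  replace (h^2 * e / (1+h^2)) with (k * e) by (unfold k; field; nra).
  assert (Hq : k * r <= t^2+h^2*m^2).
  { unfold r. assert (k * (t^2+m^2) * (1+h^2) <= (t^2+h^2*m^2)*(1+h^2)) by nra. nra. }
  assert (F1 : 2*h^2*r*(m+t) >= h^2*r*m).
  { assert (0 <= h^2*r*(m+2*t)) by (apply Rmult_le_pos; nra). nra. }
  assert (F2 : r*(m+2*t)*(t^2+h^2*m^2) >= r*(d*m)*(k*r)).
  { assert (0 <= r*(d*m)) by (apply Rmult_le_pos; [lra|apply Rmult_le_pos; lra]).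
    assert (0 <= k*r) by nra.
    assert (r*(d*m) <= r*(m+2*t)) by nra.
    apply Rle_ge. apply Rmult_le_compat; nra. }
  assert (Hfin : k * e * ((1 + r) * (h ^ 2 + r)) <= h^2 + h^2*r + d*k*r*r).
  { assert (0 <= k*(r*r)) by (apply Rmult_le_pos; nra).
    assert (k*e*(r*r) <= d*k*r*r) by nra.
    assert (hke : k*e <= 1) by (assert (k*e <= k*1) by (apply Rmult_le_compat_l; lra); lra).
    assert (k*e*h^2 <= h^2) by nra.
    assert (k*e*(1+h^2)*r <= h^2*r).
    { replace (k*e*(1+h^2)*r) with (e*(k*(1+h^2))*r) by ring. rewrite hk.
      assert (e*h^2 <= h^2) by nra. nra. }
    nra. }
  nra.
Qed.

Lemma Kt_big h t m : 0 < h -> 0 < m -> (2*(h^2+1)+1)*m <= t -> 1+h^2 <= t^2 ->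
  Dn h t m <= 8 * t * Nn h t m.
Proof.
  intros hp hm ht ht2. unfold Dn, Nn.
  set (B := h^2+1) in *.
  assert (0 < h^2) by nra.
  assert (hB : 1 < B) by (unfold B; lra).
  assert (htp : 0 < t) by nra.
  assert (h2B : 2*B*m <= t) by nra.
  assert (hmt : m <= t) by nra.
  assert (E1 : B*m*t <= t^2/2) by nra.
  assert (E2 : B*m^2*m*t <= t^2*t^2/2).
  { assert (m^2 <= t^2) by nra.
    assert (0 <= m^2) by nra.
    assert (B*m*t*m^2 <= t^2/2*m^2) by (apply Rmult_le_compat_r; nra).
    assert (t^2/2*m^2 <= t^2/2*t^2) by (apply Rmult_le_compat_l; nra).
    nra. }

  assert (Err : (h^2-1)*(1+m^2)*m*t >= -((t^2 + t^2*t^2)/2)).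
  { assert (0 <= (1+m^2)*m*t) by (apply Rmult_le_pos; [apply Rmult_le_pos|]; nra).
    assert (- B <= h^2 - 1) by (unfold B; nra).
    assert (-B*((1+m^2)*m*t) <= (h^2-1)*((1+m^2)*m*t)) by (apply Rmult_le_compat_r; lra).
    nra. }
  assert (Hr : t^2 + m^2 <= 2*t^2) by nra.
  assert (HD : (1 + (t ^ 2 + m ^ 2)) * (h ^ 2 + (t ^ 2 + m ^ 2)) <= (1+2*t^2)*(h^2+2*t^2)).
  { apply Rmult_le_compat; nra. }
  assert (HN : 12*t^2*t^2 + (16*h^2 - 4)*t^2 <= 8 * t * (2 * (t ^ 2 + h ^ 2 * (1 + m ^ 2)) * t + (h ^ 2 - 1) * (1 + m ^ 2) * m)).
  { assert (0 <= h^2*m^2*t^2) by (apply Rmult_le_pos; [apply Rmult_le_pos|]; nra). nra. }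
  assert (8*t^2*t^2 + 14*h^2*t^2 - 6*t^2 - h^2 >= 0).
  { assert (t^2*t^2 >= (1+h^2)*t^2) by (apply Rle_ge, Rmult_le_compat_r; nra).
    assert (h^2 <= h^2*t^2) by nra. nra. }
  nra.
Qed.

Ltac nzs := repeat split; try (apply Rgt_not_eq); try (apply pow_lt); try nra.

Definition Cs h := 1 + / h^2.
Definition dlt h := h^2 / (16 * (1 + h^2)).
Definition epsI h R := dlt h * h^2 / (Cs h * (h^2+R)^2 * (1+R)^3).
Definition cI h R := epsI h R * h^2 / (2 * ((1+R)*(h^2+R))).

Lemma S_le h t m : 0 < h -> sqrt (Pf h t m) <= Cs h.
Proof.
  intros hp. unfold Cs.
  assert (0 < h^2) by nra.
  assert (hi : 0 < / h^2) by (apply Rinv_0_lt_compat; auto).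
  assert (hii : h^2 * / h^2 = 1) by (field; lra).
  assert (HP : Pf h t m <= 1 + / h^2).
  { unfold Pf. set (r := t^2+m^2).
    assert (0 <= r) by (unfold r; nra).
    assert (0 <= m^2) by nra.
    apply (Rmult_le_reg_r ((1 + m ^ 2) * (h ^ 2 + r))); [nra|].
    unfold Rdiv. rewrite Rmult_assoc, Rinv_l by nra. rewrite Rmult_1_r.
    assert (1 + r <= (1 + /h^2) * (h^2 + r)).
    { replace ((1 + /h^2) * (h^2 + r)) with (h^2 + r + 1 + r * /h^2) by (field; lra).
      assert (0 <= r * / h^2) by nra. nra. }
    assert (0 <= (1 + /h^2) * (h^2 + r)) by nra.
    nra. }
  pose proof (Pf_pos h t m hp).
  assert (HC : 1 <= 1 + / h^2) by lra.
  assert (0 <= sqrt (Pf h t m)) by apply sqrt_pos.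
  assert (sqrt (Pf h t m) * sqrt (Pf h t m) = Pf h t m) by (apply sqrt_sqrt; lra).
  nra.
Qed.

Lemma caseI_bound h t m R : 0 < h -> 0 < m -> t <= -m/2 -> t^2+m^2 <= R ->
  Gd h t m - epsI h R * (1 + Kfun h t m * m) <= - cI h R.
Proof.
  intros hp hm ht hR.
  assert (h2 : 0 < h^2) by nra.
  assert (t2 : 0 <= t^2) by apply pow2_ge_0.
  assert (m2 : 0 <= m^2) by apply pow2_ge_0.
  assert (hR0 : 0 <= R) by lra.
  set (Q := t^2 + h^2 + h^2*m^2).
  assert (hQ : 0 < Q) by (unfold Q; nra).
  set (S := sqrt (Pf h t m)).
  assert (hS : 0 < S) by (apply sqrt_lt_R0, Pf_pos; auto).
  assert (hSC : S <= Cs h) by (apply S_le; auto).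
  assert (hC : 0 < Cs h) by (unfold Cs; assert (0 < / h^2) by (apply Rinv_0_lt_compat; auto); lra).
  set (D := Dn h t m).
  assert (hD : 0 < D) by (apply Dn_pos; auto).
  assert (hDle : D <= (1+R)*(h^2+R)) by (unfold D, Dn; apply Rmult_le_compat; lra).
  assert (hDge : h^2 <= D) by (unfold D, Dn; nra).
  set (Y := (h^2 + (t^2+m^2))^2 * (1+m^2)^2).
  assert (hY : 0 < Y) by (unfold Y; apply Rmult_lt_0_compat; apply pow_lt; nra).
  assert (HG : Gd h t m = - (2*t^2*Q) / (S * Y)).
  { unfold Gd, Y. fold S. unfold Q. field. nzs. }
  assert (HK : 1 + Kfun h t m * m = (D + m * Nn h t m) / D).
  { rewrite Kfun_eq. fold D. field. nzs. }
  assert (HL : h^2*(1+m^2)^2 + 2*t*m*Q <= D + m * Nn h t m).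
  { unfold D, Dn, Nn, Q. nra. }
  set (e := epsI h R).
  assert (he : 0 < e).
  { unfold e, epsI, dlt. apply Rdiv_lt_0_compat.
    - apply Rmult_lt_0_compat; [apply Rdiv_lt_0_compat|]; nra.
    - apply Rmult_lt_0_compat; [apply Rmult_lt_0_compat|]; try apply pow_lt; nra. }
  assert (hdl : 0 < dlt h) by (unfold dlt; apply Rdiv_lt_0_compat; nra).
  assert (hdl1 : dlt h * (16 * (1+h^2)) = h^2) by (unfold dlt; field; nra).
  assert (hcI : cI h R = e * h^2 / (2 * ((1+R)*(h^2+R)))) by reflexivity.
  assert (hP : 0 < (1+R)*(h^2+R)) by nra.
  assert (HeD : e * h^2 * / D >= 2 * cI h R).
  { rewrite hcI. apply Rle_ge.
    replace (2 * (e * h ^ 2 / (2 * ((1 + R) * (h ^ 2 + R))))) with (e * h^2 * / ((1+R)*(h^2+R))) by (field; nra).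
    apply Rmult_le_compat_l; [nra|]. apply Rinv_le_contravar; lra. }
  assert (hcI0 : 0 < cI h R) by (rewrite hcI; apply Rdiv_lt_0_compat; nra).
  assert (hiD : 0 < / D) by (apply Rinv_0_lt_compat; lra).
  assert (hDD : D * / D = 1) by (field; lra).
  rewrite HG, HK.
  unfold Rdiv.
  set (Nm := D + m * Nn h t m) in *.
  destruct (Rle_or_lt (dlt h) (-t)) as [Ht|Ht].
  -
    assert (Hm1 : m <= 1 + R) by nra.
    assert (HY : Y <= (h^2+R)^2 * (1+R)^2).
    { unfold Y. apply Rmult_le_compat; try (apply pow_le; nra); apply pow_incr; nra. }
    assert (Heq : e * (Cs h * (h^2+R)^2 * (1+R)^3) = dlt h * h^2).
    { unfold e, epsI. assert (0 < / h^2) by (apply Rinv_0_lt_compat; lra). field. unfold Cs. nzs. }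
    assert (Hkey : e * S * Y * m <= (-t) * D).
    { assert (e * S * Y * m <= e * (Cs h * (h^2+R)^2 * (1+R)^3)).
      { replace (e * (Cs h * (h^2+R)^2 * (1+R)^3)) with (e * Cs h * ((h^2+R)^2 * (1+R)^2) * (1+R)) by ring.
        assert (H1 : e*S <= e*Cs h) by (apply Rmult_le_compat_l; lra).
        assert (H2 : e*S*Y <= e*Cs h*((h^2+R)^2 * (1+R)^2)).
        { apply Rmult_le_compat; [apply Rmult_le_pos; lra|lra|lra|lra]. }
        apply Rmult_le_compat; [apply Rmult_le_pos; [apply Rmult_le_pos|]; lra|lra|lra|lra]. }
      assert (dlt h * h^2 <= (-t) * D) by (apply Rmult_le_compat; lra).
      lra. }
    assert (HSY : 0 < S * Y) by nra.
    assert (hiSY : 0 < / (S * Y)) by (apply Rinv_0_lt_compat; lra).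
    assert (HSY1 : (S * Y) * / (S * Y) = 1) by (field; nra).
    assert (Hfrac : e * m * / D <= (-t) * / (S * Y)).
    { apply (Rmult_le_reg_r (S * Y * D)); [nra|].
      replace (e * m * / D * (S * Y * D)) with (e * S * Y * m * (D * / D)) by ring.
      replace (- t * / (S * Y) * (S * Y * D)) with ((-t) * D * ((S * Y) * / (S * Y))) by ring.
      rewrite hDD, HSY1. lra. }
    assert (HGle : - (2 * t ^ 2 * Q) * / (S * Y) <= - (2 * (-t) * Q) * (e * m * / D)).
    { replace (- (2 * t ^ 2 * Q) * / (S * Y)) with (- (2 * (-t) * Q) * ((-t) * / (S * Y))) by ring.
      assert (0 <= 2 * (-t) * Q) by nra.
      nra. }
    assert (HNm : e * (h^2*(1+m^2)^2 + 2*t*m*Q) * / D <= e * Nm * / D).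
    { apply Rmult_le_compat_r; [lra|]. apply Rmult_le_compat_l; lra. }
    assert (Hm2 : h^2 <= h^2*(1+m^2)^2).
    { assert (1 <= (1+m^2)^2) by (rewrite <- (pow1 2); apply pow_incr; lra). nra. }
    assert (e * h^2 * / D <= e * (h^2*(1+m^2)^2) * / D).
    { apply Rmult_le_compat_r; [lra|]. apply Rmult_le_compat_l; lra. }
    nra.
  -
    assert (Hm1 : m < 2 * dlt h) by lra.
    assert (hdl16 : dlt h <= 1/16) by nra.
    assert (Hsmall : 2 * (-t) * m * Q <= h^2 / 2).
    { unfold Q.
      assert (HtQ : (-t) * m <= 2 * dlt h * dlt h) by nra.
      assert (t^2 <= dlt h * dlt h) by nra.
      assert (m^2 <= 4 * dlt h * dlt h) by nra.
      assert (Q2 : t^2 + h^2 + h^2*m^2 <= 2 * (1 + h^2)).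
      { assert (dlt h * dlt h <= 1/4) by nra. nra. }
      assert (2 * (-t) * m * (t^2 + h^2 + h^2*m^2) <= 4 * dlt h * dlt h * (2*(1+h^2))).
      { assert (0 <= t^2 + h^2 + h^2*m^2) by nra.
        assert (0 <= (-t) * m) by nra. nra. }
      assert (8 * dlt h * dlt h * (1+h^2) <= h^2 / 2).
      { assert (dlt h * dlt h * (16 * (1+h^2)) <= dlt h * h^2) by (rewrite Rmult_assoc, hdl1; lra).
        nra. }
      nra. }
    assert (Hm2 : h^2 <= h^2*(1+m^2)^2).
    { assert (1 <= (1+m^2)^2) by (rewrite <- (pow1 2); apply pow_incr; lra). nra. }
    assert (HNm : e * (h^2 / 2) * / D <= e * Nm * / D).
    { apply Rmult_le_compat_r; [lra|]. apply Rmult_le_compat_l; lra. }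
    assert (HG0 : - (2 * t ^ 2 * Q) * / (S * Y) <= 0).
    { assert (0 < / (S * Y)) by (apply Rinv_0_lt_compat; nra).
      assert (0 <= 2 * t^2 * Q) by nra. nra. }
    assert (e * (h^2/2) * / D = (e * h^2 * / D) / 2) by (field; lra).
    nra.
Qed.

Lemma rho_der h tau mu s : 0 < h -> sol h tau mu ->
  derivable_pt_lim (fun s => tau s ^ 2 + mu s ^ 2) s (2 * tau s).
Proof.
  intros hp [Ht Hm].
  eapply dext. { apply dplus; apply dsq; [apply Ht|apply Hm]. }
  rewrite Kfun_eq. pose proof (Dn_pos h (tau s) (mu s) hp). ring.
Qed.

Lemma loc_zero (g : R -> R) c d l : 0 < d -> (forall u, c - d < u < c + d -> g u = 0) ->
  derivable_pt_lim g c l -> l = 0.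
Proof.
  intros Hdp Hz Hd.
  destruct (Req_dec l 0) as [|Hl]; [assumption|exfalso].
  destruct (Hd (Rabs l) (Rabs_pos_lt _ Hl)) as [del Hdel].
  pose proof (cond_pos del).
  set (hh := Rmin (del/2) (d/2)).
  assert (0 < hh) by (unfold hh; apply Rmin_pos; lra).
  assert (hh <= del/2) by apply Rmin_l.
  assert (hh <= d/2) by apply Rmin_r.
  specialize (Hdel hh ltac:(lra) ltac:(rewrite Rabs_pos_eq; lra)).
  rewrite (Hz (c + hh) ltac:(lra)), (Hz c ltac:(lra)) in Hdel.
  replace ((0 - 0) / hh - l) with (- l) in Hdel by (field; lra).
  rewrite Rabs_Ropp in Hdel. lra.
Qed.

Lemma K_mu0 h t : 0 < h -> Kfun h t 0 * t = 2 * t^2 / (1 + t^2).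
Proof. intros hp. rewrite Kfun_eq. unfold Nn, Dn. field. split; nra. Qed.

Lemma Gf_sign h t m : 0 < h -> (0 <= m <-> 0 <= Gf h t m).
Proof.
  intros hp. unfold Gf.
  assert (0 < sqrt (Pf h t m)) by (apply sqrt_lt_R0, Pf_pos; auto).
  split; intros; nra.
Qed.

Lemma Gf_sq h t m : 0 < h -> (Gf h t m)^2 <= m^2 * Cs h.
Proof.
  intros hp. unfold Gf.
  pose proof (S_le h t m hp).
  pose proof (Pf_pos h t m hp).
  assert (Hs : sqrt (Pf h t m) * sqrt (Pf h t m) = Pf h t m) by (apply sqrt_sqrt; lra).
  assert (HP : Pf h t m <= Cs h).
  {
    unfold Cs.
    assert (0 < h^2) by nra.
    unfold Pf. set (r := t^2+m^2).
    assert (0 <= r) by (unfold r; nra).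
    assert (0 <= m^2) by nra.
    apply (Rmult_le_reg_r ((1 + m ^ 2) * (h ^ 2 + r))); [nra|].
    unfold Rdiv. rewrite Rmult_assoc, Rinv_l by nra. rewrite Rmult_1_r.
    assert (1 + r <= (1 + /h^2) * (h^2 + r)).
    { replace ((1 + /h^2) * (h^2 + r)) with (h^2 + r + 1 + r * /h^2) by (field; lra).
      assert (0 <= / h^2) by (left; apply Rinv_0_lt_compat; lra).
      assert (0 <= r * / h^2) by nra. nra. }
    assert (0 <= (1 + /h^2) * (h^2 + r)) by (assert (0 < / h^2) by (apply Rinv_0_lt_compat; lra); nra).
    nra. }
  replace ((m * sqrt (Pf h t m)) ^ 2) with (m^2 * (sqrt (Pf h t m) * sqrt (Pf h t m))) by ring.
  rewrite Hs. apply Rmult_le_compat_l; [nra|lra].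
Qed.

Lemma dneg (f : R -> R) x a : derivable_pt_lim f (-x) a ->
  derivable_pt_lim (fun s => - f (-s)) x a.
Proof.
  intros H.
  replace a with (- (a * -1)) by ring.
  apply (dopp (fun s => f (-s))).
  apply (derivable_pt_lim_comp (fun s => -s) f x (-1) a).
  - eapply dext. { apply dopp. apply did. } ring.
  - exact H.
Qed.

Lemma Kfun_neg h a b : 0 < h -> Kfun h (-a) (-b) = - Kfun h a b.
Proof. intros hp. rewrite !Kfun_eq. unfold Nn, Dn. field. split; nra. Qed.

Lemma sol_refl h tau mu : 0 < h -> sol h tau mu ->
  sol h (fun s => - tau (-s)) (fun s => - mu (-s)).
Proof.
  intros hp [Ht Hm]. split; intros s.
  - apply dneg. eapply dext. apply Ht. rewrite Kfun_neg by auto. ring.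
  - apply dneg. eapply dext. apply Hm. rewrite Kfun_neg by auto. ring.
Qed.

Lemma epsI_pos h R : 0 < h -> 0 <= R -> 0 < epsI h R.
Proof.
  intros hp hR. unfold epsI, dlt, Cs.
  assert (0 < h^2) by nra.
  assert (0 < / h^2) by (apply Rinv_0_lt_compat; nra).
  apply Rdiv_lt_0_compat.
  - apply Rmult_lt_0_compat; [apply Rdiv_lt_0_compat|]; nra.
  - apply Rmult_lt_0_compat; [apply Rmult_lt_0_compat|]; try apply pow_lt; lra.
Qed.

Lemma cI_pos h R : 0 < h -> 0 <= R -> 0 < cI h R.
Proof.
  intros hp hR. unfold cI. pose proof (epsI_pos h R hp hR).
  assert (0 < h^2) by nra.
  apply Rdiv_lt_0_compat; [nra|]. apply Rmult_lt_0_compat; [lra|]. apply Rmult_lt_0_compat; lra.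
Qed.

Lemma fwd_of h tau mu s1 : 0 < h -> sol h tau mu -> mu s1 < 0 ->
  exists M, forall s, s1 <= s -> mu s < 0 /\ Rabs (- tau s / mu s) <= M.
Proof.
  intros hp Hs Hs1.
  set (g1 := Gf h (tau s1) (mu s1)).
  assert (Hg1 : g1 < 0).
  { unfold g1. destruct (Rlt_or_le (Gf h (tau s1) (mu s1)) 0) as [|Hc]; auto.
    apply (Gf_sign h (tau s1) (mu s1) hp) in Hc. lra. }
  assert (HG : forall s, s1 <= s -> Gf h (tau s) (mu s) <= g1) by (intros; apply G_mono; auto).
  assert (Hneg : forall s, s1 <= s -> mu s < 0).
  { intros s Hs0. destruct (Rlt_or_le (mu s) 0) as [|Hc]; auto.
    apply (Gf_sign h (tau s) (mu s) hp) in Hc. specialize (HG s Hs0). lra. }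
  assert (hC : 0 < Cs h) by (unfold Cs; assert (0 < / h^2) by (apply Rinv_0_lt_compat; nra); lra).
  set (m0 := g1^2 / Cs h).
  assert (hm0 : 0 < m0) by (unfold m0; apply Rdiv_lt_0_compat; nra).
  assert (Hmu2 : forall s, s1 <= s -> m0 <= mu s ^ 2).
  { intros s Hs0. pose proof (Gf_sq h (tau s) (mu s) hp).
    pose proof (HG s Hs0).
    assert (g1^2 <= (Gf h (tau s) (mu s))^2).
    { pose proof (Gf_sign h (tau s) (mu s) hp). nra. }
    unfold m0. apply (Rmult_le_reg_r (Cs h)); [lra|].
    unfold Rdiv. rewrite Rmult_assoc, Rinv_l by lra. nra. }
  set (phi := fun s => tau s / mu s).
  assert (Hd : forall t, s1 <= t -> derivable_pt_lim phi t
              (fpoly h (tau t) (mu t) / ((mu t)^2 * Dn h (tau t) (mu t)))).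
  { intros t Ht. apply phi_der; auto. specialize (Hneg t Ht). lra. }
  assert (Hsgn : forall t, s1 <= t -> forall y, 0 < y ->
     (0 < fpoly h (tau t) (mu t) / ((mu t)^2 * Dn h (tau t) (mu t)) <-> 0 < fpoly h (tau t) (mu t))).
  { intros t Ht _ _. pose proof (Dn_pos h (tau t) (mu t) hp). specialize (Hneg t Ht).
    assert (0 < (mu t)^2 * Dn h (tau t) (mu t)) by (apply Rmult_lt_0_compat; nra).
    split; intros.
    - destruct (Rlt_or_le 0 (fpoly h (tau t) (mu t))) as [|Hc]; auto.
      exfalso. assert (fpoly h (tau t) (mu t) / ((mu t)^2 * Dn h (tau t) (mu t)) <= 0).
      { unfold Rdiv. assert (0 < / ((mu t)^2 * Dn h (tau t) (mu t))) by (apply Rinv_0_lt_compat; lra). nra. }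
      lra.
    - apply Rdiv_lt_0_compat; auto. }
  set (Lu := Rmax (phi s1) 0).
  assert (Hup : forall t, s1 <= t -> phi t <= Lu).
  { assert (B := barrier (fun s => - phi s)
       (fun t => - (fpoly h (tau t) (mu t) / ((mu t)^2 * Dn h (tau t) (mu t)))) s1 (- Lu)).
    assert (forall t, s1 < t -> - Lu < - phi t).
    { apply B.
      - intros t Ht. apply dopp. apply Hd; auto.
      - unfold Lu. pose proof (Rmax_l (phi s1) 0). lra.
      - intros t Ht Heq.
        assert (Hpt : phi t = Lu) by lra.
        assert (Lu >= 0) by (unfold Lu; pose proof (Rmax_r (phi s1) 0); lra).
        specialize (Hneg t Ht).
        assert (Htl : tau t <= 0).
        { unfold phi in Hpt. assert (tau t = Lu * mu t) by (rewrite <- Hpt; field; lra). nra. }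
        pose proof (f_neg h (tau t) (mu t) hp Hneg Htl).
        pose proof (Dn_pos h (tau t) (mu t) hp).
        assert (0 < (mu t)^2 * Dn h (tau t) (mu t)) by (apply Rmult_lt_0_compat; nra).
        assert (fpoly h (tau t) (mu t) / ((mu t)^2 * Dn h (tau t) (mu t)) < 0).
        { unfold Rdiv. assert (0 < / ((mu t)^2 * Dn h (tau t) (mu t))) by (apply Rinv_0_lt_compat; lra). nra. }
        lra. }
    intros t Ht. destruct Ht as [Ht|<-].
    - specialize (H t Ht). lra.
    - unfold Lu. apply Rmax_l. }
  set (M0 := Rmax 1 ((h+1)/m0)).
  set (Ll := Rmin (phi s1) (- M0)).
  assert (Hlow : forall t, s1 <= t -> Ll <= phi t).
  { assert (B := barrier phi
       (fun t => fpoly h (tau t) (mu t) / ((mu t)^2 * Dn h (tau t) (mu t))) s1 Ll).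
    assert (forall t, s1 < t -> Ll < phi t).
    { apply B.
      - intros t Ht. apply Hd; auto.
      - unfold Ll. apply Rmin_l.
      - intros t Ht Heq.
        assert (HM0 : 1 <= M0) by apply Rmax_l.
        assert (HM1 : (h+1)/m0 <= M0) by apply Rmax_r.
        assert (HLl : Ll <= - M0) by apply Rmin_r.
        specialize (Hneg t Ht). specialize (Hmu2 t Ht).
        assert (Ht2 : tau t = Ll * mu t) by (unfold phi in Heq; rewrite <- Heq; field; lra).
        assert (Ha1 : - mu t <= tau t) by nra.
        assert (Ha2 : h + 1 <= tau t ^ 2).
        { rewrite Ht2.
          assert (M0 * M0 <= Ll * Ll) by nra.
          assert ((h+1) <= M0 * m0).
          { apply (Rmult_le_reg_r (/ m0)). apply Rinv_0_lt_compat; lra.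
            replace (M0 * m0 * / m0) with M0 by (field; lra). exact HM1. }
          assert (M0 * m0 <= M0 * M0 * m0) by nra.
          assert (M0*M0*m0 <= Ll*Ll*(mu t ^2)) by (apply Rmult_le_compat; nra).
          nra. }
        pose proof (f_pos_big h (tau t) (mu t) hp Hneg Ha1 Ha2).
        apply Rdiv_lt_0_compat; auto.
        pose proof (Dn_pos h (tau t) (mu t) hp). apply Rmult_lt_0_compat; nra. }
    intros t Ht. destruct Ht as [Ht|<-].
    - specialize (H t Ht). lra.
    - unfold Ll. apply Rmin_l. }
  exists (Rmax Lu (- Ll)).
  intros s Hs0. split; [apply Hneg; auto|].
  replace (- tau s / mu s) with (- phi s) by (unfold phi; field; specialize (Hneg s Hs0); lra).
  rewrite Rabs_Ropp. specialize (Hup s Hs0). specialize (Hlow s Hs0).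
  apply Rabs_le. split.
  - pose proof (Rmax_r Lu (- Ll)). lra.
  - pose proof (Rmax_l Lu (- Ll)). lra.
Qed.

Lemma Gf_zero h t : Gf h t 0 = 0.
Proof. unfold Gf. ring. Qed.

Lemma claimA_pos h tau mu : 0 < h -> sol h tau mu -> (forall s, 0 <= mu s) ->
  forall s, 0 < mu s.
Proof.
  intros hp Hs Hge s1.
  destruct (Hge s1) as [|H0]; auto. exfalso.
  assert (Hz : forall s, s1 <= s -> mu s = 0).
  { intros s Hs0.
    pose proof (G_mono h tau mu s1 s hp Hs Hs0) as Hm.
    rewrite <- H0, Gf_zero in Hm.
    pose proof (proj1 (Gf_sign h (tau s) (mu s) hp) (Hge s)).
    assert (Hg0 : Gf h (tau s) (mu s) = 0) by lra.
    unfold Gf in Hg0.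
    assert (0 < sqrt (Pf h (tau s) (mu s))) by (apply sqrt_lt_R0, Pf_pos; auto).
    destruct (Rmult_integral _ _ Hg0); auto. lra. }
  destruct Hs as [Ht Hm].
  assert (Htz : forall s, s1 < s -> tau s = 0).
  { intros s Hs0.
    pose proof (loc_zero mu s (s - s1) _ ltac:(lra) (fun u Hu => Hz u ltac:(lra)) (Hm s)) as Hl.
    rewrite (Hz s ltac:(lra)), K_mu0 in Hl by auto.
    assert (0 < 1 + tau s ^ 2) by nra.
    assert (2 * tau s ^ 2 = 0).
    { apply (Rmult_eq_reg_r (/ (1 + tau s ^2))). 2: { apply Rgt_not_eq, Rinv_0_lt_compat; lra. }
      unfold Rdiv in Hl. lra. }
    nra. }
  pose proof (loc_zero tau (s1 + 1) 1 _ ltac:(lra) (fun u Hu => Htz u ltac:(lra)) (Ht (s1+1))) as Hl.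
  rewrite (Hz (s1+1) ltac:(lra)) in Hl. lra.
Qed.

Definition phid h t m := fpoly h t m / (m^2 * Dn h t m).

Lemma phid_pos h t m : 0 < h -> 0 < m -> -m/2 <= t -> 0 < phid h t m.
Proof.
  intros hp hm ht. unfold phid. apply Rdiv_lt_0_compat.
  - apply f_pos_up; auto.
  - pose proof (Dn_pos h t m hp). apply Rmult_lt_0_compat; nra.
Qed.

Lemma phi_stay h tau mu s0 L : 0 < h -> sol h tau mu -> (forall s, 0 < mu s) ->
  -1/2 < L -> L <= tau s0 / mu s0 -> forall t, s0 <= t -> L <= tau t / mu t.
Proof.
  intros hp Hs Hpos HL H0.
  assert (B := barrier (fun s => tau s / mu s) (fun s => phid h (tau s) (mu s)) s0 L).
  assert (forall t, s0 < t -> L < tau t / mu t).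
  { apply B; auto.
    - intros t _. apply phi_der; auto. specialize (Hpos t); lra.
    - intros t _ Heq. specialize (Hpos t). apply phid_pos; auto.
      assert (tau t = L * mu t) by (rewrite <- Heq; field; lra). nra. }
  intros t [Ht|<-]; auto. specialize (H t Ht); lra.
Qed.

Lemma caseII h tau mu s1 : 0 < h -> sol h tau mu -> (forall s, 0 < mu s) ->
  -1/2 < tau s1 / mu s1 -> False.
Proof.
  intros hp Hs Hpos Hs1.
  pose proof Hs as [Ht Hm].
  set (phi := fun s => tau s / mu s).
  set (p1 := phi s1).
  set (d := 1 + 2 * p1).
  assert (hd : 0 < d) by (unfold d, p1, phi; lra).
  assert (Hp1 : forall t, s1 <= t -> p1 <= phi t).
  { intros t Ht0. apply (phi_stay h tau mu s1); auto. unfold p1, phi. lra. }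
  assert (Hw : forall t, s1 <= t -> d * mu t <= mu t + 2 * tau t).
  { intros t Ht0. specialize (Hp1 t Ht0). specialize (Hpos t). unfold phi in Hp1.
    assert (p1 * mu t <= tau t).
    { apply (Rmult_le_reg_r (/ mu t)). apply Rinv_0_lt_compat; lra.
      replace (p1 * mu t * / mu t) with p1 by (field; lra). exact Hp1. }
    unfold d. lra. }
  set (r1 := tau s1 ^ 2 + mu s1 ^ 2 + 1).
  assert (hr1 : 1 <= r1) by (unfold r1; nra).
  set (X := fun t => r1 + (t - s1)).
  assert (HX : forall t, s1 <= t -> tau t ^ 2 + mu t ^ 2 <= X t ^ 2).
  { assert (B := barrier (fun t => X t ^ 2 - (tau t ^ 2 + mu t ^ 2))
                   (fun t => 2 * X t - 2 * tau t) s1 0).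
    assert (forall t, s1 < t -> 0 < X t ^ 2 - (tau t ^ 2 + mu t ^ 2)).
    { apply B.
      - intros t _. apply dminus.
        + eapply dext. { apply dsq. unfold X. apply dplus. apply dconst. apply dminus. apply did. apply dconst. } ring.
        + apply (rho_der h); auto.
      - unfold X. replace (r1 + (s1 - s1)) with r1 by ring. unfold r1. nra.
      - intros t Ht0 Heq. specialize (Hpos t).
        assert (0 < X t) by (unfold X; lra).
        assert (tau t ^ 2 < X t ^ 2) by nra.
        assert (tau t < X t) by nra. lra. }
    intros t [Ht0|<-].
    - specialize (H t Ht0). lra.
    - unfold X. replace (r1 + (s1 - s1)) with r1 by ring. unfold r1. nra. }
  set (c := h^2 * Rmin 1 d / (1+h^2)).
  assert (hc : 0 < c).
  { unfold c. apply Rdiv_lt_0_compat; [|nra]. apply Rmult_lt_0_compat; [nra|]. apply Rmin_pos; lra. }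
  assert (Hphi' : forall t, s1 <= t -> c / X t <= phid h (tau t) (mu t)).
  { intros t Ht0. specialize (Hpos t) as Hmt.
    pose proof (f_lower h (tau t) (mu t) d hp Hmt hd (Hw t Ht0)) as Hf.
    fold c in Hf.
    pose proof (Dn_pos h (tau t) (mu t) hp) as HD.
    assert (HXp : 0 < X t) by (unfold X; lra).
    assert (Hmx : mu t <= X t) by (specialize (HX t Ht0); nra).
    unfold phid.
    apply (Rle_trans _ (c / mu t)).
    - unfold Rdiv. apply Rmult_le_compat_l; [lra|]. apply Rinv_le_contravar; lra.
    - apply (Rmult_le_reg_r (mu t ^ 2 * Dn h (tau t) (mu t))); [apply Rmult_lt_0_compat; nra|].
      replace (c / mu t * (mu t ^ 2 * Dn h (tau t) (mu t))) with (c * mu t * Dn h (tau t) (mu t)) by (field; lra).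
      replace (fpoly h (tau t) (mu t) / (mu t ^ 2 * Dn h (tau t) (mu t)) * (mu t ^ 2 * Dn h (tau t) (mu t)))
        with (fpoly h (tau t) (mu t)) by (field; split; lra).
      exact Hf. }
  assert (Hz : forall t, s1 <= t -> phi s1 - c * ln (X s1) <= phi t - c * ln (X t)).
  { intros t Ht0.
    pose proof (mvt_ge (fun t => phi t - c * ln (X t))
      (fun t => phid h (tau t) (mu t) - c * (1 / X t)) s1 t 0 Ht0) as Hmv.
    assert (0 * (t - s1) <= (phi t - c * ln (X t)) - (phi s1 - c * ln (X s1))).
    { apply Hmv.
      - intros u Hu. apply dminus.
        + unfold phi. apply phi_der; auto. specialize (Hpos u); lra.
        + eapply dext. { apply dmul. apply dconst. apply dln. unfold X. apply dplus. apply dconst.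
            apply dminus. apply did. apply dconst. unfold X; lra. } unfold X. field. lra.
      - intros u Hu. specialize (Hphi' u ltac:(lra)). unfold Rdiv in Hphi'. lra. }
    lra. }
  set (A := 2*(h^2+1)+1).
  set (Y := (A - p1)/c + ln r1).
  set (s3 := s1 + exp Y).
  assert (HXs1 : X s1 = r1) by (unfold X; ring).
  assert (Hphi3 : A <= phi s3).
  { assert (Hs3 : s1 <= s3) by (unfold s3; pose proof (exp_pos Y); lra).
    specialize (Hz s3 Hs3). rewrite HXs1 in Hz.
    assert (HXs3 : exp Y <= X s3) by (unfold X, s3; lra).
    assert (Hln : Y <= ln (X s3)).
    { rewrite <- (ln_exp Y) at 1. destruct HXs3 as [Hl|He]; [left; apply ln_increasing; [apply exp_pos|exact Hl] | rewrite He; right; reflexivity]. }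
    assert (c * Y <= c * ln (X s3)) by (apply Rmult_le_compat_l; lra).
    assert (c * Y = A - p1 + c * ln r1) by (unfold Y; field; lra).
    fold p1 in Hz. lra. }
  assert (Hs3 : s1 <= s3) by (unfold s3; pose proof (exp_pos Y); lra).
  assert (HA : forall t, s3 <= t -> A <= phi t).
  { intros t Ht0. apply (phi_stay h tau mu s3); auto. unfold A; nra. }
  assert (HtA : forall t, s3 <= t -> A * mu t <= tau t).
  { intros t Ht0. specialize (HA t Ht0). specialize (Hpos t). unfold phi in HA.
    apply (Rmult_le_reg_r (/ mu t)). apply Rinv_0_lt_compat; lra.
    replace (A * mu t * / mu t) with A by (field; lra). exact HA. }
  assert (hA : 3 <= A) by (unfold A; nra).
  assert (Htp : forall t, s3 <= t -> 0 < tau t) by (intros t Ht0; specialize (HtA t Ht0); specialize (Hpos t); nra).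
  set (rho := fun t => tau t ^ 2 + mu t ^ 2).
  assert (Hrho_d : forall t, derivable_pt_lim rho t (2 * tau t)) by (intros; apply (rho_der h); auto).
  assert (Hrho_inc : forall t, s3 <= t -> rho s3 <= rho t).
  { intros t Ht0. pose proof (mvt_ge rho (fun t => 2 * tau t) s3 t 0 Ht0 (fun u _ => Hrho_d u)) as Hmv.
    assert (0 * (t - s3) <= rho t - rho s3). { apply Hmv. intros u Hu. specialize (Htp u ltac:(lra)). lra. }
    lra. }
  set (q := rho s3 / 2).
  assert (hq : 0 < q) by (unfold q, rho; specialize (Hpos s3); nra).
  set (c3 := Rmin 1 q).
  assert (hc3 : 0 < c3) by (unfold c3; apply Rmin_pos; lra).
  assert (Htc3 : forall t, s3 <= t -> c3 <= tau t).
  { intros t Ht0. specialize (Htp t Ht0) as Hp. specialize (Hrho_inc t Ht0).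
    specialize (HtA t Ht0). specialize (Hpos t).
    assert (mu t <= tau t) by nra.
    assert (q <= tau t ^ 2) by (unfold q, rho in *; nra).
    destruct (Rle_or_lt 1 (tau t)) as [H1|H1].
    - pose proof (Rmin_l 1 q). unfold c3. lra.
    - pose proof (Rmin_r 1 q). unfold c3. nra. }
  assert (Hrho_lin : forall t, s3 <= t -> rho s3 + 2 * c3 * (t - s3) <= rho t).
  { intros t Ht0. pose proof (mvt_ge rho (fun t => 2 * tau t) s3 t (2 * c3) Ht0 (fun u _ => Hrho_d u)) as Hmv.
    assert (2 * c3 * (t - s3) <= rho t - rho s3). { apply Hmv. intros u Hu. specialize (Htc3 u ltac:(lra)). lra. }
    lra. }
  set (s4 := s3 + (1 + h^2) / c3).
  assert (Hs4 : s3 <= s4) by (unfold s4; assert (0 < (1+h^2)/c3) by (apply Rdiv_lt_0_compat; nra); lra).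
  assert (Hmud : forall t, s4 <= t -> - (Kfun h (tau t) (mu t) * tau t) <= - (1/8)).
  { intros t Ht0.
    assert (Ht3 : s3 <= t) by lra.
    specialize (Hrho_lin t Ht3). specialize (HtA t Ht3). specialize (Hpos t) as Hmt.
    assert (2 * c3 * (t - s3) >= 2 * (1 + h^2)).
    { assert (t - s3 >= (1+h^2)/c3) by (unfold s4 in Ht0; lra).
      assert (c3 * ((1+h^2)/c3) = 1 + h^2) by (field; lra).
      nra. }
    assert (rho s3 >= 0) by (unfold rho; nra).
    assert (Hmt2 : mu t <= tau t) by nra.
    assert (Hmt3 : mu t ^ 2 <= tau t ^ 2) by (simpl; nra).
    assert (Htt : 1 + h^2 <= tau t ^ 2) by (unfold rho in *; lra).
    pose proof (Kt_big h (tau t) (mu t) hp Hmt HtA Htt) as HK.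
    rewrite Kfun_eq. pose proof (Dn_pos h (tau t) (mu t) hp).
    assert (1/8 <= Nn h (tau t) (mu t) / Dn h (tau t) (mu t) * tau t).
    { apply (Rmult_le_reg_r (8 * Dn h (tau t) (mu t))); [lra|].
      replace (Nn h (tau t) (mu t) / Dn h (tau t) (mu t) * tau t * (8 * Dn h (tau t) (mu t)))
        with (8 * tau t * Nn h (tau t) (mu t)) by (field; lra).
      lra. }
    lra. }
  set (t5 := s4 + 8 * (mu s4 + 1)).
  assert (Ht5 : s4 <= t5) by (unfold t5; specialize (Hpos s4); lra).
  pose proof (mvt_le mu (fun t => - (Kfun h (tau t) (mu t) * tau t)) s4 t5 (- (1/8)) Ht5
     (fun u _ => Hm u) (fun u Hu => Hmud u ltac:(lra))) as Hmv.
  specialize (Hpos t5). unfold t5 in Hmv, Hpos. lra.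
Qed.

Lemma caseI h tau mu : 0 < h -> sol h tau mu -> (forall s, 0 < mu s) ->
  (forall s, tau s / mu s <= -1/2) -> False.
Proof.
  intros hp Hs Hpos Hphi.
  pose proof Hs as [Ht Hm].
  assert (Htn : forall s, tau s <= - mu s / 2).
  { intros s. specialize (Hphi s). specialize (Hpos s).
    apply (Rmult_le_reg_r (/ mu s)). apply Rinv_0_lt_compat; lra.
    replace (- mu s / 2 * / mu s) with (-1/2) by (field; lra). exact Hphi. }
  set (rho := fun t => tau t ^ 2 + mu t ^ 2).
  set (R := rho 0).
  assert (hR : 0 <= R) by (unfold R, rho; nra).
  assert (HR : forall t, 0 <= t -> rho t <= R).
  { intros t Ht0. pose proof (mvt_le rho (fun t => 2 * tau t) 0 t 0 Ht0 (fun u _ => rho_der h tau mu u hp Hs)) as Hmv.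
    assert (rho t - rho 0 <= 0 * (t - 0)). { apply Hmv. intros u Hu. specialize (Htn u). specialize (Hpos u). lra. }
    unfold R. lra. }
  set (e := epsI h R).
  assert (he : 0 < e) by (apply epsI_pos; auto).
  assert (hc : 0 < cI h R) by (apply cI_pos; auto).
  set (Lam := fun t => Gf h (tau t) (mu t) - e * tau t).
  assert (HL : forall t, 0 <= t -> Lam t - Lam 0 <= - cI h R * (t - 0)).
  { intros t Ht0.
    apply (mvt_le Lam (fun t => Gd h (tau t) (mu t) - e * (1 + Kfun h (tau t) (mu t) * mu t)) 0 t); auto.
    - intros u _. unfold Lam. apply dminus. apply G_der; auto.
      eapply dext. { apply dmul. apply dconst. apply Ht. } simpl. ring.
    - intros u Hu. apply caseI_bound; [exact hp| apply Hpos| apply Htn| apply (HR u); lra]. }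
  assert (Hpos_L : forall t, 0 <= Lam t).
  { intros t. unfold Lam. pose proof (proj1 (Gf_sign h (tau t) (mu t) hp) (Rlt_le _ _ (Hpos t))).
    specialize (Htn t). specialize (Hpos t). nra. }
  set (t1 := Lam 0 / cI h R + 1).
  assert (Ht1 : 0 <= t1) by (unfold t1; pose proof (Hpos_L 0); assert (0 <= Lam 0 / cI h R) by (unfold Rdiv; apply Rmult_le_pos; [lra|left; apply Rinv_0_lt_compat; lra]); lra).
  specialize (HL t1 Ht1). specialize (Hpos_L t1).
  assert (cI h R * (t1 - 0) = Lam 0 + cI h R) by (unfold t1; field; lra).
  lra.
Qed.

Lemma claimA h tau mu : 0 < h -> sol h tau mu -> exists s, mu s < 0.
Proof.
  intros hp Hs.
  destruct (classic (exists s, mu s < 0)) as [|Hn]; [assumption|exfalso].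
  assert (Hge : forall s, 0 <= mu s).
  { intros s. destruct (Rlt_or_le (mu s) 0) as [H|H]; auto. exfalso. apply Hn. exists s; auto. }
  pose proof (claimA_pos h tau mu hp Hs Hge) as Hpos.
  destruct (classic (exists s1, -1/2 < tau s1 / mu s1)) as [[s1 Hs1]|Hn2].
  - exact (caseII h tau mu s1 hp Hs Hpos Hs1).
  - apply (caseI h tau mu hp Hs Hpos). intros s.
    destruct (Rle_or_lt (tau s / mu s) (-1/2)) as [|H]; auto. exfalso. apply Hn2. exists s; auto.
Qed.

Theorem claim7 (h : R) (tau mu : R -> R) :
  0 < h ->
  (forall s, derivable_pt_lim tau s (1 + Kfun h (tau s) (mu s) * mu s)) ->
  (forall s, derivable_pt_lim mu s (- (Kfun h (tau s) (mu s) * tau s))) ->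
  exists A B : R, A <= B /\
    (forall s, (s < A \/ B < s) -> mu s <> 0) /\
    (exists M : R, forall s, (s < A \/ B < s) -> Rabs (- tau s / mu s) <= M).
Proof.
  intros hp Ht Hm.
  assert (Hs : sol h tau mu) by (split; assumption).
  destruct (claimA h tau mu hp Hs) as [s1 H1].
  destruct (fwd_of h tau mu s1 hp Hs H1) as [M1 HM1].
  pose proof (sol_refl h tau mu hp Hs) as Hs'.
  destruct (claimA h _ _ hp Hs') as [s2 H2].
  destruct (fwd_of h _ _ s2 hp Hs' H2) as [M2 HM2].
  exists (Rmin (-s2) s1), (Rmax (-s2) s1).
  assert (Hback : forall s, s < -s2 -> mu s <> 0 /\ Rabs (- tau s / mu s) <= M2).
  { intros s Hs0. destruct (HM2 (-s) ltac:(lra)) as [Ha Hb].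
    repeat rewrite Ropp_involutive in Hb. repeat rewrite Ropp_involutive in Ha.
    split; [lra|].
    replace (- tau s / mu s) with (tau s / - mu s) by (field; lra). exact Hb. }
  split; [apply (Rle_trans _ (-s2)); [apply Rmin_l|apply Rmax_l]|].
  split.
  - intros s [Hs0|Hs0].
    + apply Hback. pose proof (Rmin_l (-s2) s1). lra.
    + pose proof (Rmax_r (-s2) s1). destruct (HM1 s ltac:(lra)). lra.
  - exists (Rmax M1 M2). intros s [Hs0|Hs0].
    + pose proof (Rmin_l (-s2) s1). destruct (Hback s ltac:(lra)).
      pose proof (Rmax_r M1 M2). lra.
    + pose proof (Rmax_r (-s2) s1). destruct (HM1 s ltac:(lra)).
      pose proof (Rmax_l M1 M2). lra.
Qed.
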